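(* Let $1\le k\le n$. There is no element $g\in\mathrm{Sp}(n,1)$ such that every element of $g\left(I_{n-k}\oplus\mathrm{Sp}(k,1)\right)g^{-1}$ has trace a complex number.
   Context: $\mathrm{Sp}(n,1)=\{A\in\mathrm{GL}(n+1,\mathbb H):A^*I_{n,1}A=I_{n,1}\}$ with $I_{n,1}=\mathrm{diag}(1,\dots,1,-1)$ ($n$ ones), $\mathbb H$ the quaternions. $I_{n-k}\oplus\mathrm{Sp}(k,1)$ denotes the subgroup of block-diagonal matrices $\mathrm{diag}(I_{n-k},B)$ with $I_{n-k}$ the identity matrix of size $n-k$ and $B\in\mathrm{Sp}(k,1)$ (defined analogously with $I_{k,1}$). The trace of a quaternionic matrix is the sum of its diagonal entries; ''complex number'' means an element of $\mathbb C=\mathbb R+\mathbb Ri\subset\mathbb H$. *)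

(* Defs.v *)
From HB Require Import structures.
From mathcomp Require Import all_boot all_order all_algebra.
From mathcomp Require Import ring.
From mathcomp Require Import reals.
Set Implicit Arguments. Unset Strict Implicit. Unset Printing Implicit Defensive.
Import Order.TTheory GRing.Theory Num.Theory.
Local Open Scope ring_scope.

(* The quaternions H = R + R i + R j + R k over a real field R.        *)
Record quat (R : realType) := Quat { q0 : R; q1 : R; q2 : R; q3 : R }.
Arguments Quat {R}.

Section Quat.
Variable R : realType.
Local Notation H := (quat R).

Definition quat_to (x : H) : R * R * R * R := (q0 x, q1 x, q2 x, q3 x).
Definition quat_of (x : R * R * R * R) : H :=
  let: (a, b, c, d) := x in Quat a b c d.
Lemma quat_toK : cancel quat_to quat_of. Proof. by case. Qed.

HB.instance Definition _ := Equality.copy H (can_type quat_toK).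
HB.instance Definition _ := Choice.copy H (can_type quat_toK).

Lemma quatP (x y : H) :
  q0 x = q0 y -> q1 x = q1 y -> q2 x = q2 y -> q3 x = q3 y -> x = y.
Proof. by case: x => ????; case: y => ???? /= -> -> -> ->. Qed.

Definition qzero : H := Quat 0 0 0 0.
Definition qopp (x : H) : H := Quat (- q0 x) (- q1 x) (- q2 x) (- q3 x).
Definition qadd (x y : H) : H :=
  Quat (q0 x + q0 y) (q1 x + q1 y) (q2 x + q2 y) (q3 x + q3 y).
Definition qone : H := Quat 1 0 0 0.
Definition qmul (x y : H) : H :=
  Quat (q0 x * q0 y - q1 x * q1 y - q2 x * q2 y - q3 x * q3 y)
       (q0 x * q1 y + q1 x * q0 y + q2 x * q3 y - q3 x * q2 y)
       (q0 x * q2 y - q1 x * q3 y + q2 x * q0 y + q3 x * q1 y)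
       (q0 x * q3 y + q1 x * q2 y - q2 x * q1 y + q3 x * q0 y).

Lemma qaddA : associative qadd.
Proof. by move=> x y z; apply: quatP => /=; ring. Qed.
Lemma qaddC : commutative qadd.
Proof. by move=> x y; apply: quatP => /=; ring. Qed.
Lemma qadd0 : left_id qzero qadd.
Proof. by move=> x; apply: quatP => /=; ring. Qed.
Lemma qaddN : left_inverse qzero qopp qadd.
Proof. by move=> x; apply: quatP => /=; ring. Qed.

HB.instance Definition _ := GRing.isZmodule.Build H qaddA qaddC qadd0 qaddN.

Lemma qmulA : associative qmul.
Proof. by move=> x y z; apply: quatP => /=; ring. Qed.
Lemma qmul1 : left_id qone qmul.
Proof. by move=> x; apply: quatP => /=; ring. Qed.
Lemma qmulr1 : right_id qone qmul.
Proof. by move=> x; apply: quatP => /=; ring. Qed.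
Lemma qmulDl : left_distributive qmul +%R.
Proof. by move=> x y z; apply: quatP => /=; ring. Qed.
Lemma qmulDr : right_distributive qmul +%R.
Proof. by move=> x y z; apply: quatP => /=; ring. Qed.
Lemma qone_neq0 : qone != 0.
Proof. by apply/eqP => /(congr1 (@q0 R)) /= /eqP; rewrite oner_eq0. Qed.

HB.instance Definition _ :=
  GRing.Zmodule_isNzRing.Build H qmulA qmul1 qmulr1 qmulDl qmulDr qone_neq0.

Definition qconj (x : H) : H := Quat (q0 x) (- q1 x) (- q2 x) (- q3 x).

Definition is_complex (x : H) : Prop := q2 x = 0 /\ q3 x = 0.

End Quat.

Definition qadj (R : realType) m n (A : 'M[quat R]_(m, n)) : 'M[quat R]_(n, m) :=
  \matrix_(i, j) qconj (A j i).

Definition Inn1 (R : realType) (n : nat) : 'M[quat R]_n.+1 :=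
  \matrix_(i, j) if i == j then (if (i < n)%N then 1 else -1) else 0.

Definition inSp (R : realType) (n : nat) (A : 'M[quat R]_n.+1) : Prop :=
  (exists B : 'M[quat R]_n.+1, A *m B = 1%:M /\ B *m A = 1%:M) /\
  qadj A *m Inn1 R n *m A = Inn1 R n.

(* For B of size k+1, the block-diagonal matrix diag(I_{n-k}, B) of size n+1
   (meaningful when k <= n). *)
Definition blockI (R : realType) (n k : nat) (B : 'M[quat R]_k.+1)
  : 'M[quat R]_n.+1 :=
  \matrix_(i, j)
    if ((i < n - k)%N || (j < n - k)%N) then (i == j)%:R
    else B (inord (i - (n - k))) (inord (j - (n - k))).

(* Main.v *)
Require Import Defs.
From HB Require Import structures.
From mathcomp Require Import all_boot all_order all_algebra.
From mathcomp Require Import reals.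
From mathcomp Require Import ring lra zify.
Import Order.TTheory GRing.Theory Num.Theory.
Local Open Scope ring_scope.
Set Implicit Arguments. Unset Strict Implicit.

Section S.
Variable R : realType.
Local Notation H := (quat R).

Lemma qmulE (x y : H) : x * y = qmul x y. Proof. by []. Qed.
Lemma qaddE (x y : H) : x + y = qadd x y. Proof. by []. Qed.
Lemma qoppE (x : H) : - x = qopp x. Proof. by []. Qed.
Lemma q0E : (0 : H) = qzero R. Proof. by []. Qed.
Lemma q1E : (1 : H) = qone R. Proof. by []. Qed.

Definition Nq (a : H) : R := q0 a ^+ 2 + q1 a ^+ 2 + q2 a ^+ 2 + q3 a ^+ 2.
Definition w (e a : H) : R := q2 (a * e * qconj a).
Definition e1 : H := Quat 0 1 0 0.
Definition e2 : H := Quat 0 0 1 0.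
Definition e3 : H := Quat 0 0 0 1.

Lemma w_norm a : w e1 a ^+ 2 + w e2 a ^+ 2 + w e3 a ^+ 2 = Nq a ^+ 2.
Proof. rewrite /w /Nq !qmulE /=; ring. Qed.

Lemma Nq_ge0 a : 0 <= Nq a.
Proof. rewrite /Nq; nra. Qed.

Lemma cs3 (x1 x2 x3 y1 y2 y3 p q : R) : 0 <= p -> 0 <= q ->
  x1^+2 + x2^+2 + x3^+2 = p^+2 -> y1^+2 + y2^+2 + y3^+2 = q^+2 ->
  x1 * y1 + x2 * y2 + x3 * y3 <= p * q.
Proof.
move=> hp hq hx hy.
have h1 := sqr_ge0 (q * x1 - p * y1).
have h2 := sqr_ge0 (q * x2 - p * y2).
have h3 := sqr_ge0 (q * x3 - p * y3).
have [pq0|pq0] := eqVneq (p * q) 0.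
  have z3 (a b c : R) : a^+2 + b^+2 + c^+2 = 0^+2 -> [/\ a = 0, b = 0 & c = 0].
    move=> h.
    have ha : a^+2 == 0 by rewrite eq_le sqr_ge0 andbT; nra.
    have hb : b^+2 == 0 by rewrite eq_le sqr_ge0 andbT; nra.
    have hc : c^+2 == 0 by rewrite eq_le sqr_ge0 andbT; nra.
    by move: ha hb hc; rewrite !sqrf_eq0 => /eqP -> /eqP -> /eqP ->.
  move/eqP: pq0; rewrite mulf_eq0 => /orP [] /eqP z; rewrite z in hx hy *.
    by case: (z3 _ _ _ hx) => -> -> ->; rewrite !mul0r !addr0.
  by case: (z3 _ _ _ hy) => -> -> ->; rewrite !mulr0 !addr0.
have pqp : 0 < p * q by rewrite lt_def pq0 mulr_ge0.
nra.
Qed.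

Lemma w_cs a b : w e1 a * w e1 b + w e2 a * w e2 b + w e3 a * w e3 b <= Nq a * Nq b.
Proof. apply: cs3; rewrite ?Nq_ge0 //; exact: w_norm. Qed.

Lemma qconj0 : qconj (0 : H) = 0.
Proof. by rewrite q0E; apply: quatP => /=; rewrite ?oppr0. Qed.

Lemma q0_sum I r P (F : I -> H) : q0 (\sum_(i <- r | P i) F i) = \sum_(i <- r | P i) q0 (F i).
Proof. by apply: (big_morph (@q0 R)). Qed.
Lemma q2_sum I r P (F : I -> H) : q2 (\sum_(i <- r | P i) F i) = \sum_(i <- r | P i) q2 (F i).
Proof. by apply: (big_morph (@q2 R)). Qed.
Lemma q3_sum I r P (F : I -> H) : q3 (\sum_(i <- r | P i) F i) = \sum_(i <- r | P i) q3 (F i).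
Proof. by apply: (big_morph (@q3 R)). Qed.

Definition sgR n (i : 'I_n.+1) : R := if i == ord_max then -1 else 1.
Definition sgq n (i : 'I_n.+1) : H := Quat (sgR i) 0 0 0.

Lemma Inn1_diag n : Inn1 R n = diag_mx (\row_i sgq i).
Proof.
apply/matrixP => i j; rewrite !mxE.
have -> : (i < n)%N = (i != ord_max) by rewrite -val_eqE /= ltn_neqAle -ltnS ltn_ord andbT.
rewrite /sgq /sgR; case: eqP => [->|_]; last by rewrite mulr0n.
by rewrite mulr1n; case: eqP => _; apply: quatP => //=; rewrite oppr0.
Qed.

Lemma diag1 m (d : 'rV[H]_m) : (forall i, d 0 i = 1) -> diag_mx d = 1%:M.
Proof. by move=> h; apply/matrixP => i j; rewrite !mxE h. Qed.

Lemma Inn1_sq n : Inn1 R n *m Inn1 R n = 1%:M.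
Proof.
rewrite Inn1_diag mulmx_diag; apply: diag1 => i; rewrite !mxE /sgq /sgR.
by apply: quatP => /=; case: eqP => _; ring.
Qed.

Lemma ginv_eq n (g ginv : 'M[H]_n.+1) :
  qadj g *m Inn1 R n *m g = Inn1 R n -> g *m ginv = 1%:M ->
  ginv = Inn1 R n *m qadj g *m Inn1 R n.
Proof.
move=> h1 h2.
have h3 : Inn1 R n *m qadj g *m Inn1 R n *m g = 1%:M.
  by rewrite -!mulmxA !(mulmxA (qadj g)) h1 Inn1_sq.
by rewrite -[ginv]mul1mx -h3 -mulmxA h2 mulmx1.
Qed.

Lemma qadj_diag m (d : 'rV[H]_m) : qadj (diag_mx d) = diag_mx (\row_i qconj (d 0 i)).
Proof.
apply/matrixP => i j; rewrite !mxE.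
by have [->|ne] := eqVneq i j; rewrite ?mulr1n ?mulr0n ?qconj0.
Qed.

Lemma norm_fact n (g : 'M[H]_n.+1) : qadj g *m Inn1 R n *m g = Inn1 R n ->
  \sum_i sgR i * Nq (g i ord_max) = -1.
Proof.
move/(congr1 (fun M : 'M[H]_n.+1 => q0 (M ord_max ord_max))).
rewrite Inn1_diag mul_mx_diag !mxE eqxx mulr1n q0_sum /= /sgR eqxx => h.
apply: (etrans _ h); apply: eq_bigr => i _; rewrite !mxE /sgq /sgR !qmulE /Nq /=; ring.
Qed.

Lemma trace_q2 n (g : 'M[H]_n.+1) e :
  q2 (\tr (g *m diag_mx (\row_l (if l == ord_max then e else 1)) *m (Inn1 R n *m qadj g *m Inn1 R n)))
  = - \sum_i sgR i * w e (g i ord_max).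
Proof.
rewrite Inn1_diag !mulmxA !mul_mx_diag /mxtrace q2_sum -sumrN; apply: eq_bigr => i _.
rewrite !mxE big_distrl q2_sum /=.
rewrite (bigD1 ord_max) //= big1 ?addr0.
  rewrite !mxE eqxx /sgq /sgR eqxx /w !qmulE /=; ring.
move=> l /negPf hl; rewrite !mxE hl /sgq /sgR hl !qmulE /=; ring.
Qed.

Definition dg m (e : H) : 'M[H]_m.+1 := diag_mx (\row_l (if l == ord_max then e else 1)).

Lemma blockI_dg n k (kn : (k <= n)%N) e : blockI n (dg k e) = dg n e.
Proof.
apply/matrixP => i j; rewrite !mxE.
have ilt := ltn_ord i; have jlt := ltn_ord j.
case: ifP => hij.
  have [eij|nij] := eqVneq i j; last by rewrite mulr0n.
  subst j; rewrite mulr1n.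
  have -> : (i == ord_max) = false.
    apply/negbTE; rewrite -val_eqE /=; move/orP: hij => [] /= h; lia.
  by [].
move/negbT: hij; rewrite negb_or -!leqNgt => /andP [hi hj].
have Ei : (inord (i - (n - k)) == ord_max :> 'I_k.+1) = (i == ord_max).
  rewrite -!val_eqE /= inordK; first by apply/idP/idP => /eqP h; apply/eqP; lia.
  lia.
have Eij : (inord (i - (n - k)) == inord (j - (n - k)) :> 'I_k.+1) = (i == j).
  rewrite -!val_eqE /= !inordK; try lia.
by rewrite Ei Eij.
Qed.

Lemma dg_Sp m (e : H) : Nq e = 1 -> inSp (dg m e).
Proof.
move=> He; split.
  exists (dg m (qconj e)); rewrite /dg; split; rewrite mulmx_diag; apply: diag1 => i; rewrite !mxE;
    case: eqP => _; rewrite ?mulr1 //; apply: quatP; rewrite !qmulE /=;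
    try (transitivity (Nq e); [rewrite /Nq; ring | exact: He]); ring.
rewrite /dg qadj_diag Inn1_diag !mulmx_diag; congr diag_mx; apply/matrixP => i j.
rewrite !mxE /sgq /sgR; case: eqP => _; apply: quatP; rewrite !qmulE /=;
  try (transitivity (- Nq e); [rewrite /Nq; ring | by rewrite He]); ring.
Qed.
End S.

Theorem proposition3p2 (R : realType) (n k : nat) :
  (1 <= k)%N -> (k <= n)%N ->
  ~ (exists (g ginv : 'M[quat R]_n.+1),
       inSp g /\ g *m ginv = 1%:M /\ ginv *m g = 1%:M /\
       forall B : 'M[quat R]_k.+1,
         inSp B -> is_complex (\tr (g *m blockI n B *m ginv))).
Proof.
move=> k1 kn [g [ginv [[_ hg] [hgi [_ hall]]]]].
have gi := ginv_eq hg hgi.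
have key e : Nq e = 1 -> \sum_i sgR R i * w e (g i ord_max) = 0.
  move=> he; have [h2 _] := hall _ (dg_Sp k he).
  move: h2; rewrite blockI_dg // gi /dg trace_q2 => /eqP; rewrite oppr_eq0 => /eqP //.
have c1 : \sum_i sgR R i * w (e1 R) (g i ord_max) = 0.
  by apply: key; rewrite /Nq /=; ring.
have c2 : \sum_i sgR R i * w (e2 R) (g i ord_max) = 0.
  by apply: key; rewrite /Nq /=; ring.
have c3 : \sum_i sgR R i * w (e3 R) (g i ord_max) = 0.
  by apply: key; rewrite /Nq /=; ring.
pose a := g ord_max ord_max.
pose P i := w (e1 R) (g i ord_max) * w (e1 R) a + w (e2 R) (g i ord_max) * w (e2 R) a
  + w (e3 R) (g i ord_max) * w (e3 R) a.
have S0 : \sum_i sgR R i * P i = 0.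
  have -> : \sum_i sgR R i * P i = (\sum_i sgR R i * w (e1 R) (g i ord_max)) * w (e1 R) a
     + (\sum_i sgR R i * w (e2 R) (g i ord_max)) * w (e2 R) a
     + (\sum_i sgR R i * w (e3 R) (g i ord_max)) * w (e3 R) a.
    by rewrite !mulr_suml -!big_split /=; apply: eq_bigr => i _; rewrite /P; ring.
  by rewrite c1 c2 c3 !mul0r !addr0.
have hn := norm_fact hg.
rewrite (bigD1 ord_max) //= in hn S0.
have E1 : \sum_(i < n.+1 | i != ord_max) sgR R i * P i = \sum_(i < n.+1 | i != ord_max) P i.
  by apply: eq_bigr => i /negPf h; rewrite /sgR h mul1r.
have E2 : \sum_(i < n.+1 | i != ord_max) sgR R i * Nq (g i ord_max)
        = \sum_(i < n.+1 | i != ord_max) Nq (g i ord_max).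
  by apply: eq_bigr => i /negPf h; rewrite /sgR h mul1r.
rewrite (bigD1 ord_max) //= in S0.
rewrite E1 in S0; rewrite E2 in hn.
have L : \sum_(i < n.+1 | i != ord_max) P i
   <= (\sum_(i < n.+1 | i != ord_max) Nq (g i ord_max)) * Nq a.
  by rewrite mulr_suml; apply: ler_sum => i _; apply: w_cs.
have s0 : 0 <= \sum_(i < n.+1 | i != ord_max) Nq (g i ord_max).
  by apply: sumr_ge0 => i _; apply: Nq_ge0.
have Pm : P ord_max = Nq a ^+ 2 by rewrite -w_norm /P !expr2.
move: S0 hn L s0 Pm; rewrite /sgR eqxx -/a.
set s := \sum_(i < n.+1 | i != ord_max) Nq (g i ord_max).
set X := \sum_(i < n.+1 | i != ord_max) P i.
move=> S0 hn L s0 Pm; rewrite Pm in S0.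
move: S0 hn L s0; generalize (Nq a) s X => na s' x.
clear; move=> S0 hn L s0.
nra.
Qed.
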